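(* The set of functors $\{iso_V\mid V\in\mathcal{S}\}$ is a set of projective generators, and also a set of injective cogenerators, of $\mathcal{F}_{iso}$, where $\mathcal{S}$ is a set of representatives of the isometry classes of finite-dimensional (possibly degenerate) quadratic spaces over $\mathbb{F}_2$.
   Context: $\mathcal{E}$: all $\mathbb{F}_2$-vector spaces. $\mathcal{E}_q^{deg}$: objects finite-dimensional quadratic spaces over $\mathbb{F}_2$ (possibly degenerate), morphisms injective linear maps preserving quadratic forms. $\mathrm{Sp}(\mathcal{E}_q^{deg})$: same objects, morphisms spans $[V\leftarrow D\rightarrow W]$ up to iso of $D$, composed by pullback. $\mathcal{F}_{iso}=\mathrm{Func}(\mathrm{Sp}(\mathcal{E}_q^{deg}),\mathcal{E})$. $Q_V=\mathbb{F}_2[\mathrm{Hom}_{\mathrm{Sp}(\mathcal{E}_q^{deg})}(V,-)]$; $DF=(-)^*\circ F\circ tr^{op}$ with $tr[V\leftarrow X\rightarrow W]=[W\leftarrow X\rightarrow V]$; $a_V:Q_V\to DQ_V$ corresponds by Yoneda to the linear form on $\mathbb{F}_2[\mathrm{End}(V)]$ equal to $1$ on $\mathrm{Id}_V$ and $0$ on all other basis elements; the isotropic functor $iso_V$ is the image of $a_V$. *)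

(* Defs.v *)
From HB Require Import structures.
From mathcomp Require Import all_boot all_order all_algebra.
Set Implicit Arguments. Unset Strict Implicit. Unset Printing Implicit Defensive.
Import GRing.Theory.
Local Open Scope ring_scope.

Notation F2 := ('F_2)%type.

Definition linmap (U V : lmodType F2) (f : U -> V) : Prop :=
  forall (a : F2) (u v : U), f (a *: u + v) = a *: f u + f v.

Definition polar n (q : 'rV[F2]_n -> F2) (x y : 'rV[F2]_n) : F2 :=
  q (x + y) - q x - q y.

Definition is_quadratic_form n (q : 'rV[F2]_n -> F2) : Prop :=
  (forall (a : F2) x, q (a *: x) = a ^+ 2 * q x) /\
  (forall (a : F2) x y z, polar q (a *: x + y) z = a * polar q x z + polar q y z) /\
  (forall (a : F2) x y z, polar q z (a *: x + y) = a * polar q z x + polar q z y).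

Record qspace := QSpace {
  qdim : nat;
  qform : 'rV[F2]_qdim -> F2;
  qform_quad : is_quadratic_form qform }.

Arguments qform : clear implicits.
Notation vec V := 'rV[F2]_(qdim V).

Definition isometric (V W : qspace) : Prop :=
  exists f : vec V -> vec W,
    linmap f /\ bijective f /\ forall x, qform W (f x) = qform V x.

Definition is_sphom (V W : qspace) (S : {set vec V * vec W}) : bool :=
  [&& (0, 0) \in S,
      [forall s in S, forall t in S, (s.1 + t.1, s.2 + t.2) \in S],
      [forall a : F2, forall s in S, (a *: s.1, a *: s.2) \in S],
      [forall s in S, forall t in S, (s.1 == t.1) ==> (s == t)],
      [forall s in S, forall t in S, (s.2 == t.2) ==> (s == t)] &
      [forall s in S, qform W s.2 == qform V s.1]].

Definition SpHom (V W : qspace) := {S : {set vec V * vec W} | is_sphom S}.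

Lemma sphomP (V W : qspace) (S : {set vec V * vec W}) :
  reflect
    ((0, 0) \in S /\
        (forall s t, s \in S -> t \in S -> (s.1 + t.1, s.2 + t.2) \in S) /\
        (forall (a : F2) s, s \in S -> (a *: s.1, a *: s.2) \in S) /\
        (forall s t, s \in S -> t \in S -> s.1 = t.1 -> s = t) /\
        (forall s t, s \in S -> t \in S -> s.2 = t.2 -> s = t) /\
        (forall s, s \in S -> qform W s.2 = qform V s.1))
    (is_sphom S).
Proof.
apply: (iffP idP).
  case/and5P=> H0 /forall_inP HD /forallP HZ /forall_inP H1 /andP[/forall_inP H2 /forall_inP HQ].
  do ![split] => //.
  - by move=> s t sS tS; move/forall_inP: (HD s sS); apply.
  - by move=> a s sS; move/forall_inP: (HZ a); apply.
  - by move=> s t sS tS e; apply/eqP; move/forall_inP: (H1 s sS) => /(_ t tS); rewrite e eqxx.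
  - by move=> s t sS tS e; apply/eqP; move/forall_inP: (H2 s sS) => /(_ t tS); rewrite e eqxx.
  - by move=> s sS; apply/eqP; apply: HQ.
case=> H0 [HD [HZ [H1 [H2 HQ]]]]; apply/and5P; split=> //; last apply/andP; try split.
- by apply/forall_inP=> s sS; apply/forall_inP=> t tS; apply: HD.
- by apply/forallP=> a; apply/forall_inP=> s sS; apply: HZ.
- by apply/forall_inP=> s sS; apply/forall_inP=> t tS; apply/implyP=> /eqP e; rewrite (H1 s t).
- by apply/forall_inP=> s sS; apply/forall_inP=> t tS; apply/implyP=> /eqP e; rewrite (H2 s t).
- by apply/forall_inP=> s sS; rewrite HQ.
Qed.

Definition spid_set (V : qspace) : {set vec V * vec V} :=
  [set p | p.1 == p.2].
Definition sptr_set (V W : qspace) (S : {set vec V * vec W}) : {set vec W * vec V} :=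
  [set p | (p.2, p.1) \in S].
Definition spcomp_set (U V W : qspace) (S : {set vec U * vec V})
    (T : {set vec V * vec W}) : {set vec U * vec W} :=
  [set p | [exists w, ((p.1, w) \in S) && ((w, p.2) \in T)]].

Lemma spid_ok (V : qspace) : is_sphom (spid_set V).
Proof.
apply/sphomP; do ![split].
- by rewrite inE.
- by move=> [x y] [x' y']; rewrite !inE /= => /eqP-> /eqP->.
- by move=> a [x y]; rewrite !inE /= => /eqP->.
- by move=> [x y] [x' y']; rewrite !inE /= => /eqP-> /eqP-> /= ->.
- by move=> [x y] [x' y']; rewrite !inE /= => /eqP-> /eqP-> /= ->.
- by move=> [x y]; rewrite !inE /= => /eqP->.
Qed.

Lemma sptr_ok (V W : qspace) (S : {set vec V * vec W}) :
  is_sphom S -> is_sphom (sptr_set S).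
Proof.
case/sphomP=> H0 [HD [HZ [H1 [H2 HQ]]]]; apply/sphomP; do ![split].
- by rewrite inE.
- by move=> [x y] [x' y']; rewrite !inE /= => sS tS; apply: (HD (y, x) (y', x')).
- by move=> a [x y]; rewrite !inE /= => sS; apply: (HZ a (y, x)).
- move=> [x y] [x' y']; rewrite !inE /= => sS tS e.
  by have [] := H2 (y, x) (y', x') sS tS e => -> ->.
- move=> [x y] [x' y']; rewrite !inE /= => sS tS e.
  by have [] := H1 (y, x) (y', x') sS tS e => -> ->.
- by move=> [x y]; rewrite !inE /= => sS; rewrite (HQ (y, x)).
Qed.

Lemma spcomp_ok (U V W : qspace) (S : {set vec U * vec V})
    (T : {set vec V * vec W}) :
  is_sphom S -> is_sphom T -> is_sphom (spcomp_set S T).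
Proof.
case/sphomP=> H0 [HD [HZ [H1 [H2 HQ]]]]; case/sphomP=> K0 [KD [KZ [K1 [K2 KQ]]]].
apply/sphomP; do ![split].
- by rewrite inE; apply/existsP; exists 0; rewrite H0 K0.
- move=> [x y] [x' y']; rewrite !inE /= => /existsP[w /andP[s1 s2]] /existsP[w' /andP[t1 t2]].
  apply/existsP; exists (w + w').
  by rewrite (HD (x, w) (x', w')) // (KD (w, y) (w', y')).
- move=> a [x y]; rewrite !inE /= => /existsP[w /andP[s1 s2]].
  by apply/existsP; exists (a *: w); rewrite (HZ a (x, w)) // (KZ a (w, y)).
- move=> [x y] [x' y']; rewrite !inE /= => /existsP[w /andP[s1 s2]] /existsP[w' /andP[t1 t2]] e.
  case: (H1 (x, w) (x', w') s1 t1 e) => ex ew; subst x' w'.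
  by case: (K1 (w, y) (w, y') s2 t2 erefl) => ->.
- move=> [x y] [x' y']; rewrite !inE /= => /existsP[w /andP[s1 s2]] /existsP[w' /andP[t1 t2]] e.
  case: (K2 (w, y) (w', y') s2 t2 e) => ew ey; subst w' y'.
  by case: (H2 (x, w) (x', w) s1 t1 erefl) => ->.
- move=> [x y]; rewrite !inE /= => /existsP[w /andP[s1 s2]].
  by rewrite (KQ (w, y)) // (HQ (x, w)).
Qed.

Lemma sptr_comp_set (U V W : qspace) (S : {set vec U * vec V})
    (T : {set vec V * vec W}) :
  sptr_set (spcomp_set S T) = spcomp_set (sptr_set T) (sptr_set S).
Proof.
rewrite /sptr_set /spcomp_set.
apply/setP=> -[x y]; rewrite !inE /=.
by apply/existsP/existsP=> -[w]; rewrite ?inE /= => /andP[h1 h2]; exists w;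
  rewrite ?inE /= ?h1 ?h2.
Qed.

Lemma spcompA_set (U V W X : qspace) (S : {set vec U * vec V})
    (T : {set vec V * vec W}) (R : {set vec W * vec X}) :
  spcomp_set (spcomp_set S T) R = spcomp_set S (spcomp_set T R).
Proof.
rewrite /spcomp_set.
apply/setP=> -[x y]; rewrite !inE /=; apply/existsP/existsP.
  case=> w /andP[]; rewrite inE /= => /existsP[v /andP[h1 h2]] h3.
  by exists v; rewrite h1 inE; apply/existsP; exists w; rewrite h2.
case=> v /andP[h1]; rewrite inE /= => /existsP[w /andP[h2 h3]].
by exists w; rewrite h3 inE andbT; apply/existsP; exists v; rewrite h1.
Qed.

Lemma spcomp1s_set (V W : qspace) (S : {set vec V * vec W}) :
  spcomp_set (spid_set V) S = S.
Proof.
rewrite /sptr_set /spcomp_set /spid_set.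
apply/setP=> -[x y]; rewrite !inE /=; apply/existsP/idP.
  by case=> w /andP[]; rewrite inE /= => /eqP->.
by move=> h; exists x; rewrite inE eqxx.
Qed.

Lemma spcomps1_set (V W : qspace) (S : {set vec V * vec W}) :
  spcomp_set S (spid_set W) = S.
Proof.
rewrite /sptr_set /spcomp_set /spid_set.
apply/setP=> -[x y]; rewrite !inE /=; apply/existsP/idP.
  by case=> w /andP[h]; rewrite inE /= => /eqP<-.
by move=> h; exists y; rewrite inE eqxx andbT.
Qed.

Lemma sptr_id_set (V : qspace) : sptr_set (spid_set V) = spid_set V.
Proof.
rewrite /sptr_set /spcomp_set /spid_set. by apply/setP=> -[x y]; rewrite !inE eq_sym. Qed.

Definition spid (V : qspace) : SpHom V V := exist (fun S => is_sphom S) _ (spid_ok V).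
Definition sptr (V W : qspace) (f : SpHom V W) : SpHom W V :=
  exist (fun S => is_sphom S) _ (sptr_ok (valP f)).
(* [spcomp f g] is "f, then g" (i.e. g o f). *)
Definition spcomp (U V W : qspace) (f : SpHom U V) (g : SpHom V W) : SpHom U W :=
  exist (fun S => is_sphom S) _ (spcomp_ok (valP f) (valP g)).

Lemma sptr_comp (U V W : qspace) (f : SpHom U V) (g : SpHom V W) :
  sptr (spcomp f g) = spcomp (sptr g) (sptr f).
Proof. by apply: val_inj; rewrite /= sptr_comp_set. Qed.
Lemma spcompA (U V W X : qspace) (f : SpHom U V) (g : SpHom V W) (h : SpHom W X) :
  spcomp (spcomp f g) h = spcomp f (spcomp g h).
Proof. by apply: val_inj; rewrite /= spcompA_set. Qed.
Lemma spcomp1s (V W : qspace) (f : SpHom V W) : spcomp (spid V) f = f.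
Proof. by apply: val_inj; rewrite /= spcomp1s_set. Qed.
Lemma spcomps1 (V W : qspace) (f : SpHom V W) : spcomp f (spid W) = f.
Proof. by apply: val_inj; rewrite /= spcomps1_set. Qed.
Lemma sptr_id (V : qspace) : sptr (spid V) = spid V.
Proof. by apply: val_inj; rewrite /= sptr_id_set. Qed.

Unset Implicit Arguments.
Record Func := MkFunc {
  Fob :> qspace -> lmodType F2;
  Fmor : forall {V W : qspace}, SpHom V W -> Fob V -> Fob W;
  Fmor_linear : forall V W (f : SpHom V W), linmap (Fmor f);
  Fmor_id : forall V (x : Fob V), Fmor (spid V) x = x;
  Fmor_comp : forall U V W (f : SpHom U V) (g : SpHom V W) (x : Fob U),
      Fmor (spcomp f g) x = Fmor g (Fmor f x) }.

Record NatTrans (F G : Func) := MkNatTrans {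
  nt :> forall V : qspace, F V -> G V;
  nt_linear : forall V : qspace, linmap (nt V);
  nt_natural : forall V W (f : SpHom V W) (x : F V),
      nt W (Fmor F f x) = Fmor G f (nt V x) }.
Arguments nt {F G} n V _.
Set Implicit Arguments.

Definition nt_eq (F G : Func) (a b : NatTrans F G) : Prop :=
  forall V (x : F V), a V x = b V x.

Definition is_epi (F G : Func) (p : NatTrans F G) : Prop :=
  forall (H : Func) (a b : NatTrans G H),
    (forall V (x : F V), a V (p V x) = b V (p V x)) -> nt_eq a b.
Definition is_mono (F G : Func) (i : NatTrans F G) : Prop :=
  forall (H : Func) (a b : NatTrans H F),
    (forall V (x : H V), i V (a V x) = i V (b V x)) -> nt_eq a b.

Definition is_projective (P : Func) : Prop :=
  forall (F G : Func) (p : NatTrans F G) (h : NatTrans P G),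
    is_epi p -> exists l : NatTrans P F, forall V (x : P V), p V (l V x) = h V x.
Definition is_injective (I : Func) : Prop :=
  forall (F G : Func) (i : NatTrans F G) (h : NatTrans F I),
    is_mono i -> exists e : NatTrans G I, forall V (x : F V), e V (i V x) = h V x.

Definition is_generating (J : Type) (P : J -> Func) : Prop :=
  forall (F G : Func) (a b : NatTrans F G), ~ nt_eq a b ->
    exists (j : J) (h : NatTrans (P j) F),
      ~ (forall V (x : P j V), a V (h V x) = b V (h V x)).
Definition is_cogenerating (J : Type) (P : J -> Func) : Prop :=
  forall (F G : Func) (a b : NatTrans F G), ~ nt_eq a b ->
    exists (j : J) (h : NatTrans G (P j)),
      ~ (forall V (x : F V), h V (a V x) = h V (b V x)).

(* Q_V(W) = F_2[Hom(V,W)] is modelled as functions Hom(V,W) -> F_2      *)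
(* (Hom(V,W) is finite); DQ_V(W) = Q_V(W)^* is identified with           *)
(* functions Hom(V,W) -> F_2 via the dual basis of the basis Hom(V,W). *)
Notation FF V W := {ffun SpHom V W -> F2^o}.

(* Q_V on morphisms: f |-> h o f on basis elements. *)
Definition Qmap (V W X : qspace) (h : SpHom W X) (phi : FF V W) : FF V X :=
  [ffun f' => \sum_(f : SpHom V W | spcomp f h == f') phi f].

(* DQ_V on morphisms: DQ_V(h) = Q_V(tr h)^*. *)
Definition DQmap (V W X : qspace) (h : SpHom W X) (l : FF V W) : FF V X :=
  [ffun g => l (spcomp g (sptr h))].

(* a_V(W) : Q_V(W) -> DQ_V(W); on basis elements f, g:                   *)
(* a_V(W)(f)(g) = delta_{Id_V}(tr(f) o g).                                *)
Definition aV (V W : qspace) (phi : FF V W) : FF V W :=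
  [ffun g => \sum_(f : SpHom V W) phi f * ((spcomp g (sptr f) == spid V)%:R)].

Lemma aV_linear (V W : qspace) (a : F2) (phi psi : FF V W) :
  aV (a *: phi + psi) = a *: aV phi + aV psi.
Proof.
apply/ffunP=> g; rewrite !ffunE scaler_sumr -big_split /=.
by apply: eq_bigr=> f _; rewrite !ffunE mulrDl scalerAl.
Qed.

Lemma aV0 (V W : qspace) : aV (0 : FF V W) = 0.
Proof. by apply/ffunP=> g; rewrite !ffunE big1 // => f _; rewrite ffunE mul0r. Qed.

Lemma aVD (V W : qspace) (p q : FF V W) : aV (p + q) = aV p + aV q.
Proof. by have := aV_linear 1 p q; rewrite !scale1r. Qed.

Lemma aVZ (V W : qspace) (a : F2) (p : FF V W) : aV (a *: p) = a *: aV p.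
Proof. by have := aV_linear a p 0; rewrite !addr0 aV0 addr0. Qed.

Lemma aV_natural (V W X : qspace) (h : SpHom W X) (phi : FF V W) :
  DQmap h (aV phi) = aV (Qmap h phi).
Proof.
apply/ffunP=> g; rewrite !ffunE.
under [RHS]eq_bigr do rewrite ffunE mulr_suml.
rewrite (exchange_big_dep xpredT) //=.
apply: eq_bigr=> f _; rewrite (big_pred1 (spcomp f h)); last by move=> f'; rewrite eq_sym.
by rewrite sptr_comp spcompA.
Qed.

Definition iso_img (V W : qspace) : {pred FF V W} :=
  fun l => [exists phi : FF V W, aV phi == l].
Arguments iso_img : clear implicits.

Lemma iso_imgE (V W : qspace) (l : FF V W) :
  (l \in iso_img V W) = [exists phi : FF V W, aV phi == l].
Proof. by []. Qed.

Lemma iso_img_closed (V W : qspace) : GRing.subsemimod_closed (iso_img V W).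
Proof.
split; first split.
- by rewrite iso_imgE; apply/existsP; exists 0; rewrite aV0.
- move=> u v; rewrite !iso_imgE => /existsP[p /eqP<-] /existsP[q /eqP<-].
  apply/existsP; exists (p + q).
  by rewrite aVD.
- move=> a u; rewrite !iso_imgE => /existsP[p /eqP<-]; apply/existsP; exists (a *: p).
  by rewrite aVZ.
Qed.

HB.instance Definition _ (V W : qspace) :=
  GRing.isSubmodClosed.Build F2 (FF V W) (iso_img V W) (iso_img_closed V W).

Inductive iso_ob (V W : qspace) : predArgType :=
  IsoElt (l : FF V W) of l \in iso_img V W.
Definition iso_val (V W : qspace) (x : iso_ob V W) : FF V W :=
  let: IsoElt l _ := x in l.
HB.instance Definition _ (V W : qspace) := [isSub of iso_ob V W for @iso_val V W].
HB.instance Definition _ (V W : qspace) := [Choice of iso_ob V W by <:].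
HB.instance Definition _ (V W : qspace) := [SubChoice_isSubZmodule of iso_ob V W by <:].
HB.instance Definition _ (V W : qspace) := [SubZmodule_isSubLmodule of iso_ob V W by <:].

Lemma DQmap_img (V W X : qspace) (h : SpHom W X) (l : FF V W) :
  l \in iso_img V W -> DQmap h l \in iso_img V X.
Proof.
rewrite !iso_imgE => /existsP[p /eqP<-]; apply/existsP; exists (Qmap h p).
by rewrite aV_natural.
Qed.

Definition iso_mor (V W X : qspace) (h : SpHom W X) (x : iso_ob V W) : iso_ob V X :=
  IsoElt (DQmap_img h (valP x)).
Arguments iso_mor V {W X} h x.

Lemma iso_mor_linear (V W X : qspace) (h : SpHom W X) : linmap (iso_mor V h).
Proof. by move=> a u v; apply: val_inj; apply/ffunP=> g; rewrite /= !ffunE. Qed.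

Lemma iso_mor_id (V W : qspace) (x : iso_ob V W) : iso_mor V (spid W) x = x.
Proof.
by apply: val_inj; apply/ffunP=> g; rewrite /= ffunE sptr_id spcomps1.
Qed.

Lemma iso_mor_comp (V U W X : qspace) (f : SpHom U W) (g : SpHom W X)
    (x : iso_ob V U) :
  iso_mor V (spcomp f g) x = iso_mor V g (iso_mor V f x).
Proof.
by apply: val_inj; apply/ffunP=> k; rewrite /= !ffunE sptr_comp spcompA.
Qed.

Definition isoF (V : qspace) : Func :=
  MkFunc (fun W => iso_ob V W) (fun W X h => iso_mor V h)
    (fun W X h => @iso_mor_linear V W X h) (fun W x => @iso_mor_id V W x)
    (fun U W X f g x => @iso_mor_comp V U W X f g x).

(* Main.v *)
Require Import Defs.
From mathcomp Require Import all_boot all_order all_algebra.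
From mathcomp Require classical_sets.
From Stdlib Require Import Classical ClassicalEpsilon.
Set Implicit Arguments. Unset Strict Implicit. Unset Printing Implicit Defensive.
Import GRing.Theory.
Local Open Scope ring_scope.

Lemma F2_cases (a : F2) : a = 0 \/ a = 1.
Proof.
have H : (Zp_trunc (pdiv 2)).+2 = 2%N by [].
case: a => -[|[|n]] Hn; [left|right|]; try by apply: val_inj.
by exfalso; move: Hn; rewrite H.
Qed.

Lemma F2_11 : (1 + 1 : F2) = 0.
Proof. by apply: val_inj. Qed.

Lemma addvv (M : lmodType F2) (v : M) : v + v = 0.
Proof. by rewrite -{1 2}(scale1r v) -scalerDl F2_11 scale0r. Qed.

Lemma oppvE (M : lmodType F2) (v : M) : - v = v.
Proof. by apply/eqP; rewrite eq_sym -subr_eq0 opprK addvv. Qed.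

Lemma ext_functional (M : lmodType F2) (U : M -> Prop) (f : M -> F2) :
  U 0 -> (forall u v, U u -> U v -> U (u + v)) ->
  (forall u v, U u -> U v -> f (u + v) = f u + f v) ->
  exists psi : M -> F2^o, linmap psi /\ forall u, U u -> psi u = f u.
Proof.
move=> U0 UD fD.
have f0 : f 0 = 0.
  by have := fD 0 0 U0 U0; rewrite addr0 => /(congr1 (fun x => x - f 0)); rewrite subrr addrK.
pose Good (A : M * F2 -> Prop) :=
  [/\ forall m a b, A (m, a) -> A (m, b) -> a = b,
      forall m a m' a', A (m, a) -> A (m', a') -> A (m + m', a + a') &
      forall u, U u -> A (u, f u)].
pose P (A : classical_sets.set (M * F2)) := (forall t, ~ A t) \/ Good A.
have [A [PA Amax]] : exists A, P A /\ (forall B, classical_sets.proper A B -> ~ P B).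
  apply: classical_sets.Zorn_bigcup => F FP Ftot.
  have [Fe|Fne] := classic (forall X, F X -> forall t, ~ X t).
    by left=> t [Y FY Yt]; exact: (Fe Y FY t).
  right.
  have [X0 [FX0 [t0 X0t0]]] : exists X0, F X0 /\ exists t0, X0 t0.
    apply: NNPP => H; apply: Fne => X FX t Xt; apply: H; by exists X; split=> //; exists t.
  have goodof : forall Y t, F Y -> Y t -> Good Y.
    move=> Y1 t1 FY1 Yt1; case: (FP Y1 FY1) => // Ye; by case: (Ye t1).
  have both : forall X Y s t, F X -> F Y -> X s -> Y t ->
      exists Z, [/\ Good Z, Z s, Z t & F Z].
    move=> X Y s t FX FY Xs Yt; case: (Ftot X Y FX FY) => [XY|YX].
      by exists Y; split=> //; [exact: (goodof Y t) | exact: XY].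
    by exists X; split=> //; [exact: (goodof X s) | exact: YX].
  split.
  - move=> m a b [X FX Xa] [Y FY Yb].
    have [Z [[Zg _ _] Za Zb _]] := both _ _ _ _ FX FY Xa Yb; exact: Zg Za Zb.
  - move=> m a m' a' [X FX Xa] [Y FY Yb].
    have [Z [[_ Zd _] Za Zb FZ]] := both _ _ _ _ FX FY Xa Yb.
    by exists Z => //; exact: Zd.
  - move=> u Uu; have [_ _ X0e] := goodof X0 t0 FX0 X0t0; by exists X0 => //; exact: X0e.
have gA : Good A.
  case: PA => // Ae; exfalso.
  apply: (Amax (fun t => exists u, U u /\ t = (u, f u))).
    split; first by move=> t At; case: (Ae t).
    by move=> H; apply: (Ae (0, f 0)); apply: H; exists 0.
  right; split.
  - by move=> m a b [u [_ [-> ->]]] [u' [_ [-> ->]]].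
  - move=> m a m' a' [u [Uu [-> ->]]] [u' [Uu' [-> ->]]].
    by exists (u + u'); split; [exact: UD | rewrite fD].
  - by move=> u Uu; exists u.
have [Ag Ad Ae] := gA.
have A00 : A (0, 0) by have := Ae 0 U0; rewrite f0.
have Atot : forall m, exists a, A (m, a).
  move=> m; apply: NNPP => Hm.
  pose B t := A t \/ exists a0 a, A (a0, a) /\ t = (a0 + m, a).
  apply: (Amax B).
    split; first by move=> t At; left.
    move=> H; apply: Hm; exists 0; rewrite -[m]add0r; apply: H; by right; exists 0, 0.
  right; split.
  - move=> m0 a b [Ha|[a0 [a1 [Ha E1]]]] [Hb|[b0 [b1 [Hb E2]]]].
    + exact: Ag Ha Hb.
    + case: E2 => E2 E3; exfalso; apply: Hm; exists (a + b1).
      have := Ad _ _ _ _ Ha Hb; by rewrite E2 addrC addrA addvv add0r.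
    + case: E1 => E1 E3; exfalso; apply: Hm; exists (a1 + b).
      have := Ad _ _ _ _ Ha Hb; rewrite E1 addrA addvv add0r; exact.
    + case: E1 => E1 E1'; case: E2 => E2 E2'; subst.
      move/addIr: E2 => E2; subst; exact: Ag Ha Hb.
  - move=> m1 a m' a' [Ha|[a0 [a1 [Ha [-> ->]]]]] [Hb|[b0 [b1 [Hb [-> ->]]]]].
    + by left; exact: Ad.
    + by right; exists (m1 + b0), (a + b1); split; [exact: Ad | rewrite addrA].
    + by right; exists (a0 + m'), (a1 + a'); split; [exact: Ad | rewrite addrAC].
    + left; rewrite addrACA addvv addr0; exact: Ad.
  - by move=> u Uu; left; exact: Ae.
pose psi (m : M) : F2^o := if excluded_middle_informative (A (m, 1)) then (1 : F2) else 0.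
have Apsi : forall m, A (m, psi m).
  move=> m; rewrite /psi; case: excluded_middle_informative => // H.
  have [a Ha] := Atot m; case: (F2_cases a) Ha => -> //.
exists psi; split.
  move=> a u v; apply: Ag (Apsi _) _; apply: Ad (Apsi v).
  by case: (F2_cases a) => ->; rewrite ?scale0r ?mul0r ?scale1r ?mul1r.
by move=> u Uu; apply: Ag (Apsi _) (Ae _ Uu).
Qed.



Lemma sp_fun1 (V W : qspace) (f : SpHom V W) x y y' :
  (x, y) \in val f -> (x, y') \in val f -> y = y'.
Proof.
case/sphomP: (valP f) => _ [_ [_ [H1 _]]] h1 h2.
by case: (H1 _ _ h1 h2 erefl).
Qed.

Lemma sp_fun2 (V W : qspace) (f : SpHom V W) x x' y :
  (x, y) \in val f -> (x', y) \in val f -> x = x'.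
Proof.
case/sphomP: (valP f) => _ [_ [_ [_ [H2 _]]]] h1 h2.
by case: (H2 _ _ h1 h2 erefl).
Qed.

Lemma sp_compE (U V W : qspace) (f : SpHom U V) (g : SpHom V W) x y :
  ((x, y) \in val (spcomp f g)) = [exists w, ((x, w) \in val f) && ((w, y) \in val g)].
Proof. by rewrite /= inE. Qed.

Lemma sp_trE (V W : qspace) (f : SpHom V W) x y :
  ((x, y) \in val (sptr f)) = ((y, x) \in val f).
Proof. by rewrite /= inE. Qed.

Lemma sp_idE (V : qspace) (x y : vec V) : ((x, y) \in val (spid V)) = (x == y).
Proof. by rewrite /= inE. Qed.

Lemma sp_eq (V W : qspace) (f g : SpHom V W) :
  (forall x y, ((x, y) \in val f) = ((x, y) \in val g)) -> f = g.
Proof. by move=> H; apply: val_inj; apply/setP => -[x y]; exact: H. Qed.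

Lemma sptrK (V W : qspace) (f : SpHom V W) : sptr (sptr f) = f.
Proof. by apply: sp_eq => x y; rewrite !sp_trE. Qed.

Definition sdom (V W : qspace) (f : SpHom V W) : {set vec V} :=
  [set x | [exists y, (x, y) \in val f]].
Definition total (V W : qspace) (f : SpHom V W) : bool := sdom f == setT.

Lemma totalP (V W : qspace) (f : SpHom V W) :
  reflect (forall x, exists y, (x, y) \in val f) (total f).
Proof.
apply: (iffP eqP).
  move=> H x; have : x \in sdom f by rewrite H inE.
  by rewrite inE => /existsP.
by move=> H; apply/setP => x; rewrite !inE; apply/existsP; exact: H.
Qed.

Lemma total_id (V : qspace) : total (spid V).
Proof. by apply/totalP => x; exists x; rewrite sp_idE. Qed.

Lemma total_compl (U V W : qspace) (f : SpHom U V) (g : SpHom V W) :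
  total (spcomp f g) -> total f.
Proof.
move/totalP=> H; apply/totalP=> x; have [y] := H x.
by rewrite sp_compE => /existsP [w /andP [h _]]; exists w.
Qed.

Lemma compK1 (V W X : qspace) (f : SpHom V W) (h : SpHom W X) (g : SpHom V X) :
  total f ->
  (spcomp g (sptr h) == f) = total (spcomp f h) && (g == spcomp f h).
Proof.
move/totalP=> ft; apply/eqP/andP.
  move=> E.
  have gE : g = spcomp f h.
    apply: sp_eq => x y; rewrite sp_compE; apply/idP/existsP.
      move=> xy; have [u xu] := ft x; exists u; rewrite xu /=.
      move: xu; rewrite -E sp_compE => /existsP [y' /andP [xy' uy']].
      by rewrite -sp_trE (sp_fun1 xy xy').
    case=> u /andP [xu uy]; move: xu; rewrite -E sp_compE => /existsP [y' /andP [xy' uy']].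
    by rewrite sp_trE in uy'; rewrite (sp_fun1 uy uy').
  split; last by apply/eqP.
  apply/totalP=> x; have [u xu] := ft x.
  have : (x, u) \in val (spcomp g (sptr h)) by rewrite E.
  rewrite sp_compE.
  by case/existsP=> y' /andP [xy' _]; exists y'; rewrite -gE.
case=> /totalP tt /eqP ->; apply: sp_eq => x w; rewrite sp_compE.
apply/existsP/idP.
  case=> y /andP []; rewrite sp_compE sp_trE => /existsP [u /andP [xu uy]] wy.
  by rewrite -(sp_fun2 uy wy).
move=> xw; have [y] := tt x; rewrite sp_compE => /existsP [u /andP [xu uy]].
exists y; rewrite (sp_fun1 xu xw) in uy; rewrite sp_trE uy andbT sp_compE.
by apply/existsP; exists w; rewrite xw.
Qed.

Lemma compK2 (V W : qspace) (f g : SpHom V W) :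
  (spcomp g (sptr f) == spid V) = total f && (g == f).
Proof. by rewrite compK1 ?total_id // spcomp1s. Qed.

Definition piset (V : qspace) (D : {set vec V}) : {set vec V * vec V} :=
  [set p | (p.1 == p.2) && (p.1 \in D)].
Definition pd (V : qspace) (D : {set vec V}) : SpHom V V := insubd (spid V) (piset D).

Definition subsp (V : qspace) (D : {set vec V}) : bool :=
  (0 \in D) && [forall x in D, forall y in D, x + y \in D].

Lemma subsp_sphom (V : qspace) (D : {set vec V}) : subsp D -> is_sphom (piset D).
Proof.
case/andP=> D0 /forall_inP DD; apply/sphomP; do ![split].
- by rewrite inE /= eqxx D0.
- move=> [x y] [x' y']; rewrite !inE /= => /andP [/eqP <- xD] /andP [/eqP <- x'D].
  by rewrite eqxx /=; move/forall_inP: (DD x xD); apply.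
- move=> a [x y]; rewrite !inE /= => /andP [/eqP <- xD]; rewrite eqxx /=.
  by case: (F2_cases a) => ->; rewrite ?scale0r ?scale1r.
- by move=> [x y] [x' y']; rewrite !inE /= => /andP [/eqP <- _] /andP [/eqP <- _] ->.
- by move=> [x y] [x' y']; rewrite !inE /= => /andP [/eqP <- _] /andP [/eqP <- _] /= ->.
- by move=> [x y]; rewrite !inE /= => /andP [/eqP <- _].
Qed.

Lemma pdE (V : qspace) (D : {set vec V}) x y : subsp D ->
  ((x, y) \in val (pd D)) = (x == y) && (x \in D).
Proof. by move=> sD; rewrite /pd val_insubd subsp_sphom // inE. Qed.


Lemma sdom_subsp (V W : qspace) (h : SpHom V W) : subsp (sdom h).
Proof.
case/sphomP: (valP h) => H0 [HD _]; apply/andP; split.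
  by rewrite inE; apply/existsP; exists 0.
apply/forall_inP=> x; rewrite inE => /existsP [y xy]; apply/forall_inP=> x'.
rewrite inE => /existsP [y' xy']; rewrite inE; apply/existsP; exists (y + y').
exact: (HD (x, y) (x', y')).
Qed.

Lemma pd_sdom (V W : qspace) (h : SpHom V W) : spcomp (pd (sdom h)) h = h.
Proof.
apply: sp_eq => x y; rewrite sp_compE; apply/existsP/idP.
  by case=> w /andP []; rewrite pdE ?sdom_subsp // => /andP [/eqP <- _].
move=> xy; exists x; rewrite pdE ?sdom_subsp // eqxx xy /= inE.
by rewrite andbT; apply/existsP; exists y.
Qed.

Lemma subspI (V : qspace) (D E : {set vec V}) : subsp D -> subsp E -> subsp (D :&: E).
Proof.
case/andP=> D0 /forall_inP DD /andP [E0 /forall_inP EE]; apply/andP; split.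
  by rewrite inE D0 E0.
apply/forall_inP=> x; rewrite inE => /andP [xD xE]; apply/forall_inP=> y.
rewrite inE => /andP [yD yE]; rewrite inE.
by move/forall_inP: (DD x xD) => -> //; move/forall_inP: (EE x xE) => ->.
Qed.

Lemma pd_comp (V : qspace) (D E : {set vec V}) : subsp D -> subsp E ->
  spcomp (pd D) (pd E) = pd (D :&: E).
Proof.
move=> sD sE; apply: sp_eq => x y; rewrite sp_compE pdE ?subspI // inE.
apply/existsP/idP.
  by case=> w; rewrite !pdE // => /andP [/andP [/eqP <- ->] /andP [-> ->]].
case/andP=> /eqP <- /andP [xD xE]; exists x; by rewrite !pdE // eqxx xD xE.
Qed.

Lemma pd_comm (V : qspace) (D E : {set vec V}) : subsp D -> subsp E ->
  spcomp (pd D) (pd E) = spcomp (pd E) (pd D).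
Proof. by move=> sD sE; rewrite !pd_comp // setIC. Qed.

Lemma pd_idem (V : qspace) (D : {set vec V}) : subsp D ->
  spcomp (pd D) (pd D) = pd D.
Proof. by move=> sD; rewrite pd_comp // setIid. Qed.

Lemma pd_nontotal (V : qspace) (D : {set vec V}) : subsp D -> D != setT -> ~~ total (pd D).
Proof.
move=> sD DT; apply: contra DT => /totalP H; apply/eqP/setP=> x; rewrite inE.
by have [y] := H x; rewrite pdE // => /andP [_ ->].
Qed.

Section Lin.
Variables (U V : lmodType F2) (g : U -> V) (gl : linmap g).
Lemma lin0 : g 0 = 0.
Proof.
have H := gl 1 0 0; rewrite !scale1r addr0 in H.
by apply: (addrI (g 0)); rewrite addr0 -H.
Qed.
Lemma linD u v : g (u + v) = g u + g v.
Proof. by have := gl 1 u v; rewrite !scale1r. Qed.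
Lemma linZ (a : F2) u : g (a *: u) = a *: g u.
Proof. by rewrite -[a *: u]addr0 gl lin0 addr0. Qed.
Lemma linB u v : g (u - v) = g u - g v.
Proof. by rewrite !oppvE linD. Qed.
Lemma lin_sum (I : Type) (r : seq I) (P : pred I) (F : I -> U) :
  g (\sum_(i <- r | P i) F i) = \sum_(i <- r | P i) g (F i).
Proof.
elim: r => [|i r IH]; first by rewrite !big_nil lin0.
by rewrite !big_cons; case: (P i); rewrite ?linD IH.
Qed.
End Lin.

Definition Lset (V : qspace) : seq {set vec V} :=
  [seq D <- enum {set vec V} | subsp D && (D != setT)].

Definition Eop (F : Func) (V : qspace) (s : seq {set vec V}) (x : F V) : F V :=
  foldr (fun D y => y + Fmor F (pd D) y) x s.
Arguments Eop F {V} s x.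

Definition EE (F : Func) (V : qspace) (x : F V) : F V := Eop F (Lset V) x.
Arguments EE F {V} x.

Lemma mem_Lset (V : qspace) (D : {set vec V}) : (D \in Lset V) = subsp D && (D != setT).
Proof. by rewrite mem_filter mem_enum andbT. Qed.

Lemma Eop_lin (F : Func) (V : qspace) s : linmap (@Eop F V s).
Proof.
move=> a u v; elim: s => [|D s IH] //=.
rewrite IH (Fmor_linear F) addrACA; congr (_ + _).
by rewrite scalerDr.
Qed.

Lemma Eop_kill (F : Func) (V : qspace) (s : seq {set vec V}) D x :
  all (@subsp V) s -> D \in s -> Fmor F (pd D) (Eop F s x) = 0.
Proof.
elim: s => [|D' s IH] //= /andP [sD' ss]; rewrite inE => /orP [/eqP eD| Ds].
  subst D'; rewrite (linD (Fmor_linear F _ _ _)) -Fmor_comp pd_idem //.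
  exact: addvv.
have sD : subsp D by move/allP: ss; apply.
rewrite (linD (Fmor_linear F _ _ _)) -Fmor_comp pd_comm // Fmor_comp IH //.
by rewrite (lin0 (Fmor_linear F _ _ _)) addr0.
Qed.

Lemma Eop_id (F : Func) (V : qspace) (s : seq {set vec V}) y :
  (forall D, D \in s -> Fmor F (pd D) y = 0) -> Eop F s y = y.
Proof.
elim: s => [|D s IH] //= H; rewrite IH ?H ?mem_head ?addr0 //.
by move=> D' D's; apply: H; rewrite inE D's orbT.
Qed.

Lemma Eop_nat (F G : Func) (a : NatTrans F G) (V : qspace) s x :
  a V (Eop F s x) = Eop G s (a V x).
Proof.
elim: s => [|D s IH] //=.
by rewrite (linD (nt_linear _ _ a V)) nt_natural IH.
Qed.

Lemma Eop_pd (F : Func) (V : qspace) (s : seq {set vec V}) D x :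
  all (@subsp V) s -> subsp D ->
  Fmor F (pd D) (Eop F s x) = Eop F s (Fmor F (pd D) x).
Proof.
move=> + sD; elim: s => [|D' s IH] //= /andP [sD' ss].
rewrite (linD (Fmor_linear F _ _ _)) -Fmor_comp pd_comm // Fmor_comp IH //.
Qed.

Lemma Eop_fun (F : Func) (V : qspace) (s : seq {set vec V}) (phi : F V -> F2^o) x :
  linmap phi -> (forall D y, D \in s -> phi (Fmor F (pd D) y) = 0) ->
  phi (Eop F s x) = phi x.
Proof.
move=> phl; elim: s => [|D s IH] //= H.
rewrite (linD phl) H ?mem_head // addr0 IH //.
by move=> D' y D's; apply: H; rewrite inE D's orbT.
Qed.

Lemma Lset_sub (V : qspace) : all (@subsp V) (Lset V).
Proof. by apply/allP=> D; rewrite mem_Lset => /andP []. Qed.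

Lemma EE_nontotal (F : Func) (V W : qspace) (h : SpHom V W) x :
  ~~ total h -> Fmor F h (EE F x) = 0.
Proof.
move=> nt; rewrite -(pd_sdom h) Fmor_comp Eop_kill ?Lset_sub ?(lin0 (Fmor_linear F _ _ _)) //.
by rewrite mem_Lset sdom_subsp.
Qed.

Lemma iso_val_sum (V W : qspace) (I : Type) (r : seq I) (F : I -> iso_ob V W) :
  val (\sum_(i <- r) F i) = \sum_(i <- r) val (F i).
Proof.
elim: r => [|i r IH]; rewrite ?big_nil ?big_cons //.
by rewrite -IH.
Qed.

Lemma iso_img_supp (V W : qspace) (l : FF V W) :
  l \in iso_img V W -> forall f, ~~ total f -> l f = 0.
Proof.
rewrite iso_imgE => /existsP [phi /eqP <-] f nf; rewrite ffunE big1 // => g _.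
rewrite compK2; case: (boolP (total g)) => tg /=; last by rewrite mulr0.
case: eqP => [E|_]; last by rewrite mulr0.
by move: nf; rewrite E tg.
Qed.

Lemma supp_iso_img (V W : qspace) (l : FF V W) :
  (forall f, ~~ total f -> l f = 0) -> l \in iso_img V W.
Proof.
move=> H; rewrite iso_imgE; apply/existsP; exists l; apply/eqP/ffunP => g.
rewrite ffunE (bigD1 g) //= big1 ?addr0.
  rewrite compK2 eqxx andbT; case: (boolP (total g)) => tg; first by rewrite mulr1.
  by rewrite mulr0 H.
by move=> f fg; rewrite compK2 eq_sym (negbTE fg) andbF mulr0.
Qed.

Definition delta_id (V : qspace) : FF V V := [ffun f => ((f == spid V)%:R : F2)].

Lemma delta_id_img (V : qspace) : delta_id V \in iso_img V V.
Proof.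
apply: supp_iso_img => f nf; rewrite ffunE; case: eqP => // E.
by move: nf; rewrite E total_id.
Qed.

Definition eid (V : qspace) : iso_ob V V := IsoElt (delta_id_img V).

Lemma iso_mor_eid (V W : qspace) (f : SpHom V W) (g : SpHom V W) :
  val (iso_mor V f (eid V)) g = (total f && (g == f))%:R.
Proof. by rewrite /= !ffunE compK2. Qed.

Lemma iso_decomp (V W : qspace) (l : iso_ob V W) :
  l = \sum_(f : SpHom V W) val l f *: iso_mor V f (eid V).
Proof.
apply: val_inj; rewrite iso_val_sum; apply/ffunP => g.
rewrite sum_ffunE (bigD1 g) //= big1 ?addr0.
  rewrite ffunE iso_mor_eid eqxx andbT.
  case: (boolP (total g)) => tg; first by rewrite [RHS]mulr1.
  by rewrite [RHS]mulr0 (iso_img_supp (valP l)).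
by move=> f fg; rewrite ffunE iso_mor_eid eq_sym (negbTE fg) andbF [LHS]mulr0.
Qed.

Section Lam.
Variables (F : Func) (V : qspace) (x : F V).
Hypothesis Hx : forall W (h : SpHom V W), ~~ total h -> Fmor F h x = 0.

Definition lam_fun (W : qspace) (l : iso_ob V W) : F W :=
  \sum_(f : SpHom V W) val l f *: Fmor F f x.

Lemma lam_lin W : linmap (@lam_fun W).
Proof.
move=> a u v; rewrite /lam_fun scaler_sumr -big_split; apply: eq_bigr => f _ /=.
by rewrite !ffunE scalerDl scalerA.
Qed.

Lemma lam_eid W (k : SpHom V W) : lam_fun (iso_mor V k (eid V)) = Fmor F k x.
Proof.
rewrite /lam_fun (bigD1 k) //= big1 ?addr0.
  rewrite iso_mor_eid eqxx andbT; case: (boolP (total k)) => tk.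
    by rewrite scale1r.
  by rewrite scale0r Hx.
by move=> f fk; rewrite iso_mor_eid (negbTE fk) andbF scale0r.
Qed.

Lemma lam_nat W X (h : SpHom W X) (l : iso_ob V W) :
  lam_fun (iso_mor V h l) = Fmor F h (lam_fun l).
Proof.
rewrite {1}(iso_decomp l) (lin_sum (@iso_mor_linear V W X h)) (lin_sum (@lam_lin X)).
rewrite [in RHS]/lam_fun (lin_sum (Fmor_linear F _ _ _)); apply: eq_bigr => f _.
rewrite (linZ (@iso_mor_linear V W X h)) (linZ (@lam_lin X)) -iso_mor_comp lam_eid.
by rewrite (linZ (Fmor_linear F _ _ _)) Fmor_comp.
Qed.

Definition lamNT : NatTrans (isoF V) F :=
  MkNatTrans (isoF V) F (fun W => @lam_fun W) (fun W => @lam_lin W)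
    (fun W X h l => @lam_nat W X h l).

Lemma lamNT_eid : lamNT V (eid V) = x.
Proof. by rewrite /= -[eid V](iso_mor_id) lam_eid Fmor_id. Qed.
End Lam.

Lemma sptr_pd_sdom (V X : qspace) (f : SpHom V X) :
  spcomp (sptr f) (pd (sdom f)) = sptr f.
Proof.
apply: sp_eq => x v; rewrite sp_compE sp_trE; apply/existsP/idP.
  by case=> w /andP []; rewrite sp_trE pdE ?sdom_subsp // => xw /andP [/eqP <- _].
move=> vx; exists v; rewrite sp_trE vx pdE ?sdom_subsp // eqxx /= inE.
by apply/existsP; exists x.
Qed.

Lemma sdom_Lset (V X : qspace) (f : SpHom V X) : ~~ total f -> sdom f \in Lset V.
Proof. by move=> nf; rewrite mem_Lset sdom_subsp. Qed.

Section Eta.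
Variables (G : Func) (V : qspace) (phi : G V -> F2^o).
Hypothesis phil : linmap phi.
Hypothesis Hphi : forall D y, D \in Lset V -> phi (Fmor G (pd D) y) = 0.

Definition eta_ff (X : qspace) (g : G X) : FF V X :=
  [ffun f => phi (Fmor G (sptr f) g)].

Lemma eta_img X (g : G X) : eta_ff g \in iso_img V X.
Proof.
apply: supp_iso_img => f nf; rewrite ffunE -sptr_pd_sdom Fmor_comp.
by apply: Hphi; exact: sdom_Lset.
Qed.

Definition eta_fun (X : qspace) (g : G X) : iso_ob V X := IsoElt (eta_img g).

Lemma eta_val X (g : G X) f : val (eta_fun g) f = phi (Fmor G (sptr f) g).
Proof. by rewrite /= ffunE. Qed.

Lemma eta_lin X : linmap (@eta_fun X).
Proof.
move=> a u v; apply: val_inj; apply/ffunP => f.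
by rewrite /= !ffunE (Fmor_linear G) phil.
Qed.

Lemma eta_nat X Y (h : SpHom X Y) (g : G X) :
  eta_fun (Fmor G h g) = iso_mor V h (eta_fun g).
Proof.
apply: val_inj; apply/ffunP => f; rewrite /= !ffunE.
by rewrite sptr_comp sptrK Fmor_comp.
Qed.

Definition etaNT : NatTrans G (isoF V) :=
  MkNatTrans G (isoF V) (fun X => @eta_fun X) (fun X => @eta_lin X)
    (fun X Y h g => @eta_nat X Y h g).
End Eta.

Lemma Qmap_lin (V W X : qspace) (h : SpHom W X) : linmap (@Qmap V W X h).
Proof.
move=> a u v; apply/ffunP => g; rewrite !ffunE scaler_sumr -big_split.
by apply: eq_bigr => f _; rewrite !ffunE.
Qed.

Lemma Qmap_id (V W : qspace) (phi : FF V W) : Qmap (spid W) phi = phi.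
Proof.
apply/ffunP => g; rewrite ffunE (eq_bigl (fun f => f == g)) ?big_pred1_eq //.
by move=> f; rewrite spcomps1.
Qed.

Lemma Qmap_comp (V U W X : qspace) (f : SpHom U W) (g : SpHom W X) (phi : FF V U) :
  Qmap (spcomp f g) phi = Qmap g (Qmap f phi).
Proof.
apply/ffunP => k; rewrite !ffunE.
under [RHS]eq_bigr do rewrite ffunE.
rewrite (exchange_big_dep (fun m => spcomp (spcomp m f) g == k)) /=; last first.
  by move=> n m /eqP <- /eqP ->.
apply: eq_big => [m|m Hm]; first by rewrite spcompA.
rewrite (big_pred1 (spcomp m f)) // => n /=.
case: (eqVneq n (spcomp m f)) => [->|ne]; first by rewrite andbT spcompA.
by rewrite andbF.
Qed.

Definition QF (V : qspace) : Func :=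
  MkFunc (fun W => FF V W) (fun W X h => @Qmap V W X h)
    (fun W X h => @Qmap_lin V W X h) (fun W x => @Qmap_id V W x)
    (fun U W X f g x => @Qmap_comp V U W X f g x).

Lemma DQmap_lin (V W X : qspace) (h : SpHom W X) : linmap (@DQmap V W X h).
Proof. by move=> a u v; apply/ffunP => g; rewrite !ffunE. Qed.

Lemma DQmap_id (V W : qspace) (l : FF V W) : DQmap (spid W) l = l.
Proof. by apply/ffunP => g; rewrite ffunE sptr_id spcomps1. Qed.

Lemma DQmap_comp (V U W X : qspace) (f : SpHom U W) (g : SpHom W X) (l : FF V U) :
  DQmap (spcomp f g) l = DQmap g (DQmap f l).
Proof. by apply/ffunP => k; rewrite !ffunE sptr_comp spcompA. Qed.

Definition DQF (V : qspace) : Func :=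
  MkFunc (fun W => FF V W) (fun W X h => @DQmap V W X h)
    (fun W X h => @DQmap_lin V W X h) (fun W x => @DQmap_id V W x)
    (fun U W X f g x => @DQmap_comp V U W X f g x).

Lemma zero_lin (U V : lmodType F2) : linmap (fun _ : U => (0 : V)).
Proof. by move=> a u v; rewrite scaler0 addr0. Qed.

Definition ntzero (F G : Func) : NatTrans F G :=
  MkNatTrans F G (fun V _ => 0) (fun V => @zero_lin (F V) (G V))
    (fun V W f x => esym (lin0 (Fmor_linear G _ _ f))).

Section Mono.
Variables (F : Func) (W : qspace) (x : F W).

Definition yon_fun (X : qspace) (phi : FF W X) : F X :=
  \sum_(f : SpHom W X) phi f *: Fmor F f x.

Lemma yon_lin X : linmap (@yon_fun X).
Proof.
move=> a u v; rewrite /yon_fun scaler_sumr -big_split; apply: eq_bigr => f _ /=.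
by rewrite !ffunE scalerDl scalerA.
Qed.

Lemma yon_nat X Y (h : SpHom X Y) (phi : FF W X) :
  yon_fun (Qmap h phi) = Fmor F h (yon_fun phi).
Proof.
rewrite /yon_fun (lin_sum (Fmor_linear F _ _ _)).
under eq_bigr do rewrite ffunE scaler_suml.
rewrite (exchange_big_dep xpredT) //=; apply: eq_bigr => f _.
rewrite (big_pred1 (spcomp f h)); last by move=> g; rewrite eq_sym.
by rewrite (linZ (Fmor_linear F _ _ _)) Fmor_comp.
Qed.

Definition yonNT : NatTrans (QF W) F :=
  MkNatTrans (QF W) F (fun X => @yon_fun X) (fun X => @yon_lin X)
    (fun X Y h phi => @yon_nat X Y h phi).

Lemma yon_delta : yon_fun (delta_id W) = x.
Proof.
rewrite /yon_fun (bigD1 (spid W)) //= big1 ?addr0.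
  by rewrite ffunE eqxx scale1r Fmor_id.
by move=> f fn; rewrite ffunE (negbTE fn) scale0r.
Qed.
End Mono.

Lemma mono_inj (F G : Func) (i : NatTrans F G) : is_mono i ->
  forall W (x : F W), i W x = 0 -> x = 0.
Proof.
move=> mi W x ix.
have := mi (QF W) (yonNT x) (ntzero _ _) _ W (delta_id W).
rewrite /= yon_delta; apply.
move=> X phi; rewrite /= /yon_fun (lin_sum (nt_linear _ _ i X)) (lin0 (nt_linear _ _ i X)).
apply: big1 => f _; rewrite (linZ (nt_linear _ _ i X)) nt_natural ix.
by rewrite (lin0 (Fmor_linear G _ _ _)) scaler0.
Qed.

Section Dual.
Variables (G : Func) (V : qspace) (psi : G V -> F2^o).
Hypothesis psil : linmap psi.

Definition dual_fun (X : qspace) (g : G X) : FF V X :=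
  [ffun f => psi (Fmor G (sptr f) g)].

Lemma dual_lin X : linmap (@dual_fun X).
Proof. by move=> a u v; apply/ffunP => f; rewrite !ffunE (Fmor_linear G) psil. Qed.

Lemma dual_nat X Y (h : SpHom X Y) (g : G X) :
  dual_fun (Fmor G h g) = DQmap h (dual_fun g).
Proof. by apply/ffunP => f; rewrite !ffunE sptr_comp sptrK Fmor_comp. Qed.

Definition dualNT : NatTrans G (DQF V) :=
  MkNatTrans G (DQF V) (fun X => @dual_fun X) (fun X => @dual_lin X)
    (fun X Y h g => @dual_nat X Y h g).
End Dual.

Lemma epi_surj (F G : Func) (p : NatTrans F G) : is_epi p ->
  forall V (y : G V), exists x, p V x = y.
Proof.
move=> ep V y; apply: NNPP => ny.
pose f (m : G V) : F2 := if excluded_middle_informative (exists x, m = p V x) then 0 else 1.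
have pl := nt_linear _ _ p V.
have fval : forall x (c : F2), f (p V x + c *: y) = c.
  move=> x c; rewrite /f; case: (F2_cases c) => ->;
    case: excluded_middle_informative => // H; exfalso.
    by apply: H; exists x; rewrite scale0r addr0.
  case: H => x' E; apply: ny; exists (x' - x).
  by rewrite (linB pl) -E scale1r addrC addKr.
have U0 : exists x (c : F2), (0 : G V) = p V x + c *: y.
  by exists 0, 0; rewrite scale0r addr0 (lin0 pl).
have UD : forall u v, (exists x (c : F2), u = p V x + c *: y) ->
    (exists x (c : F2), v = p V x + c *: y) -> (exists x (c : F2), u + v = p V x + c *: y).
  move=> u v [x [c ->]] [x' [c' ->]]; exists (x + x'), (c + c').
  by rewrite (linD pl) scalerDl addrACA.
have fD : forall u v, (exists x (c : F2), u = p V x + c *: y) ->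
    (exists x (c : F2), v = p V x + c *: y) -> f (u + v) = f u + f v.
  move=> u v [x [c ->]] [x' [c' ->]].
  by rewrite addrACA -scalerDl -(linD pl) !fval.
have [psi [psil psiU]] := @ext_functional (G V)
   (fun m => exists x (c : F2), m = p V x + c *: y) f U0 UD fD.
have psi_p : forall x, psi (p V x) = 0.
  move=> x; rewrite psiU; last by exists x, 0; rewrite scale0r addr0.
  by have := fval x 0; rewrite scale0r addr0.
have psi_y : psi y = 1.
  rewrite psiU; last by exists 0, 1; rewrite (lin0 pl) add0r scale1r.
  by have := fval 0 1; rewrite (lin0 pl) add0r scale1r.
have E : dualNT psil V y = ntzero G (DQF V) V y.
  apply: ep => X x; apply/ffunP => g; rewrite /= !ffunE -nt_natural psi_p.
  by rewrite /ntzero /=.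
move: E => /(congr1 (fun l : FF V V => l (spid V))).
rewrite /= ffunE sptr_id Fmor_id psi_y /ntzero /= ffunE => H.
by have := @oner_neq0 F2; rewrite H eqxx.
Qed.

Lemma iso_mor_val (V W X : qspace) (k : SpHom W X) (l : iso_ob V W) g :
  val (iso_mor V k l) g = val l (spcomp g (sptr k)).
Proof. by rewrite /= ffunE. Qed.

Lemma iso_mor_eid0 (V W : qspace) (f : SpHom V W) :
  ~~ total f -> iso_mor V f (eid V) = 0.
Proof.
move=> nf; apply: val_inj; apply/ffunP => g.
by rewrite iso_mor_eid (negbTE nf) /= ffunE.
Qed.

Lemma sptr_pd (V : qspace) (D : {set vec V}) : subsp D -> sptr (pd D) = pd D.
Proof.
move=> sD; apply: sp_eq => x y; rewrite sp_trE !pdE //.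
by case: eqP => [->|]; rewrite ?eqxx // eq_sym => /eqP /negbTE ->.
Qed.

Lemma Lset_nontotal (V : qspace) D : D \in Lset V -> ~~ total (pd D).
Proof. by rewrite mem_Lset => /andP [sD DT]; exact: pd_nontotal. Qed.

Lemma Lset_subsp (V : qspace) D : D \in Lset V -> subsp D.
Proof. by rewrite mem_Lset => /andP []. Qed.

Lemma iso_proj (V : qspace) : is_projective (isoF V).
Proof.
move=> F G p h ep.
set y := h V (eid V).
have [x' px'] := epi_surj ep y.
set x := EE F x'.
have Hx : forall W (k : SpHom V W), ~~ total k -> Fmor F k x = 0.
  by move=> W k nk; exact: EE_nontotal.
have pxy : p V x = y.
  rewrite /x /EE Eop_nat px' Eop_id // => D DL.
  rewrite /y -nt_natural /= iso_mor_eid0 ?Lset_nontotal //.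
  exact: (lin0 (nt_linear _ _ h V)).
exists (lamNT Hx) => W l.
rewrite /= /lam_fun {2}(iso_decomp l) (lin_sum (nt_linear _ _ p W)) (lin_sum (nt_linear _ _ h W)).
apply: eq_bigr => f _.
rewrite (linZ (nt_linear _ _ p W)) (linZ (nt_linear _ _ h W)) nt_natural pxy.
by rewrite /y -nt_natural.
Qed.

Lemma iso_inj (V : qspace) : is_injective (isoF V).
Proof.
move=> F G i h mi.
pose phi0 (x : F V) : F2^o := val (h V x) (spid V).
have phi0l : linmap phi0.
  move=> a u v; rewrite /phi0 (nt_linear _ _ h V).
  by rewrite -[val (_ + _)]/(a *: val (h V u) + val (h V v)) !ffunE.
have phi0k : forall D x, D \in Lset V -> phi0 (Fmor F (pd D) x) = 0.
  move=> D x DL; rewrite /phi0 nt_natural /= ffunE spcomp1s.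
  apply: (iso_img_supp (valP (h V x))).
  by rewrite sptr_pd ?Lset_subsp ?Lset_nontotal.
have il := nt_linear _ _ i V.
have iinj : forall x x', i V x = i V x' -> x = x'.
  move=> x x' E; apply/eqP; rewrite -subr_eq0; apply/eqP.
  by apply: (mono_inj mi); rewrite (linB il) E subrr.
pose f (m : G V) : F2 :=
  match excluded_middle_informative (exists x, m = i V x) with
  | left H => phi0 (proj1_sig (constructive_indefinite_description _ H))
  | right _ => 0 end.
have fval : forall x, f (i V x) = phi0 x.
  move=> x; rewrite /f; case: excluded_middle_informative => [H|[]]; last by exists x.
  case: (constructive_indefinite_description _ H) => x' /= E.
  by rewrite (iinj _ _ E).
have U0 : exists x, (0 : G V) = i V x by exists 0; rewrite (lin0 il).
have UD : forall u v, (exists x, u = i V x) -> (exists x, v = i V x) ->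
    exists x, u + v = i V x.
  by move=> u v [x ->] [x' ->]; exists (x + x'); rewrite (linD il).
have fD : forall u v, (exists x, u = i V x) -> (exists x, v = i V x) ->
    f (u + v) = f u + f v.
  by move=> u v [x ->] [x' ->]; rewrite -(linD il) !fval (linD phi0l).
have [psi [psil psiU]] := @ext_functional (G V) (fun m => exists x, m = i V x) f U0 UD fD.
pose phi (g : G V) : F2^o := psi (EE G g).
have phil : linmap phi.
  by move=> a u v; rewrite /phi /EE Eop_lin psil.
have phik : forall D y, D \in Lset V -> phi (Fmor G (pd D) y) = 0.
  move=> D y DL; rewrite /phi /EE -Eop_pd ?Lset_sub ?Lset_subsp //.
  by rewrite Eop_kill ?Lset_sub // (lin0 psil).
exists (etaNT phil phik) => W x.
apply: val_inj; apply/ffunP => g.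
rewrite /= ffunE.
rewrite /phi -nt_natural /EE -Eop_nat psiU; last by eexists.
by rewrite fval Eop_fun // /phi0 nt_natural /= ffunE spcomp1s sptrK.
Qed.

Lemma subsp_sum (V : qspace) (D : {set vec V}) (I : finType) (c : I -> F2) (d : I -> vec V) :
  subsp D -> (forall i, d i \in D) -> \sum_i c i *: d i \in D.
Proof.
case/andP=> D0 /forall_inP DD dD.
apply: (big_ind (fun v => v \in D)) => //.
  by move=> u v uD vD; move/forall_inP: (DD u uD); apply.
by move=> i _; case: (F2_cases (c i)) => ->; rewrite ?scale0r ?scale1r.
Qed.

Section SubQ.
Variables (V : qspace) (D : {set vec V}).
Hypothesis sD : subsp D.

Definition subM : 'M[F2]_(#|D|, qdim V) := \matrix_(i < #|D|) (enum_val i : vec V).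
Definition subB := row_base subM.
Definition subq_form (v : 'rV[F2]_(\rank subM)) : F2 := qform V (v *m subB).

Lemma subq_polar x y : polar subq_form x y = polar (qform V) (x *m subB) (y *m subB).
Proof. by rewrite /polar /subq_form mulmxDl. Qed.

Lemma subq_quad : is_quadratic_form subq_form.
Proof.
have [Q1 [Q2 Q3]] := qform_quad V; split; [|split].
- by move=> a x; rewrite /subq_form -scalemxAl Q1.
- by move=> a x y z; rewrite !subq_polar mulmxDl -scalemxAl Q2.
- by move=> a x y z; rewrite !subq_polar mulmxDl -scalemxAl Q3.
Qed.

Definition subq : qspace := QSpace subq_quad.

Lemma sub_inD (u : 'rV[F2]_(qdim V)) : (u <= subM)%MS -> u \in D.
Proof.
case/submxP=> w ->; rewrite mulmx_sum_row; apply: subsp_sum => // i.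
by rewrite rowK enum_valP.
Qed.

Lemma subB_inD (v : 'rV[F2]_(\rank subM)) : v *m subB \in D.
Proof. by apply: sub_inD; rewrite -(eq_row_base subM) submxMl. Qed.

Lemma subB_surj (d : vec V) : d \in D -> exists v : 'rV[F2]_(\rank subM), v *m subB = d.
Proof.
move=> dD; have : (row (enum_rank_in dD d) subM <= subB)%MS.
  by rewrite (eq_row_base subM) row_sub.
by case/submxP=> v; rewrite rowK enum_rankK_in // => ->; exists v.
Qed.

Lemma subB_inj : injective (fun v : 'rV[F2]_(\rank subM) => v *m subB).
Proof. exact: row_free_inj (row_base_free subM). Qed.

Lemma subq_dim : D != setT -> (qdim subq < qdim V)%N.
Proof.
move=> DT; rewrite /= ltn_neqAle rank_leq_col andbT; apply: contra DT => /eqP full.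
apply/eqP/setP => v; rewrite inE; apply: sub_inD; apply: submx_full.
by rewrite /row_full full.
Qed.

Definition incl_set : {set vec subq * vec V} := [set p | p.2 == p.1 *m subB].

Lemma incl_ok : is_sphom incl_set.
Proof.
apply/sphomP; do ![split].
- by rewrite inE /= mul0mx.
- by move=> [x y] [x' y']; rewrite !inE /= => /eqP -> /eqP ->; rewrite mulmxDl.
- by move=> a [x y]; rewrite !inE /= => /eqP ->; rewrite scalemxAl.
- by move=> [x y] [x' y']; rewrite !inE /= => /eqP -> /eqP -> /= ->.
- move=> [x y] [x' y']; rewrite !inE /= => /eqP -> /eqP -> /= E.
  by rewrite (subB_inj E).
- by move=> [x y]; rewrite !inE /= => /eqP ->.
Qed.

Definition incl : SpHom subq V := exist _ incl_set incl_ok.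

Lemma incl_factor : spcomp (sptr incl) incl = pd D.
Proof.
apply: sp_eq => x y; rewrite sp_compE pdE //; apply/existsP/idP.
  case=> w; rewrite sp_trE /= !inE /= => /andP [/eqP -> /eqP ->].
  by rewrite eqxx subB_inD.
case/andP=> /eqP <- xD; have [v vx] := subB_surj xD.
by exists v; rewrite sp_trE /= !inE /= vx eqxx.
Qed.
End SubQ.

Lemma sub_factor (V : qspace) (D : {set vec V}) : D \in Lset V ->
  exists D' : qspace, (qdim D' < qdim V)%N /\
    exists (s : SpHom V D') (t : SpHom D' V), spcomp s t = pd D.
Proof.
rewrite mem_Lset => /andP [sD DT].
exists (subq D); split; first exact: subq_dim.
by exists (sptr (incl D)), (incl D); exact: incl_factor.
Qed.

Lemma iso_spans (V W : qspace) : isometric V W ->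
  exists (s : SpHom V W) (t : SpHom W V), spcomp s t = spid V /\ spcomp t s = spid W.
Proof.
case=> sg [sl [[sg' c1 c2] sq]].
have si : injective sg := can_inj c1.
pose S : {set vec V * vec W} := [set p | p.2 == sg p.1].
have Sok : is_sphom S.
  apply/sphomP; do ![split].
  - by rewrite inE /= (lin0 sl).
  - by move=> [x y] [x' y']; rewrite !inE /= => /eqP -> /eqP ->; rewrite (linD sl).
  - by move=> a [x y]; rewrite !inE /= => /eqP ->; rewrite (linZ sl).
  - by move=> [x y] [x' y']; rewrite !inE /= => /eqP -> /eqP -> /= ->.
  - by move=> [x y] [x' y']; rewrite !inE /= => /eqP -> /eqP -> /= /si ->.
  - by move=> [x y]; rewrite !inE /= => /eqP ->.
pose s : SpHom V W := exist _ S Sok.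
exists s, (sptr s); split.
  apply: sp_eq => x y; rewrite sp_compE sp_idE; apply/existsP/idP.
    by case=> w; rewrite sp_trE /= !inE /= => /andP [/eqP -> /eqP /si ->].
  by move=> /eqP <-; exists (sg x); rewrite sp_trE /= !inE /= eqxx.
apply: sp_eq => x y; rewrite sp_compE sp_idE; apply/existsP/idP.
  by case=> w; rewrite sp_trE /= !inE /= => /andP [/eqP -> /eqP ->].
by move=> /eqP <-; exists (sg' x); rewrite sp_trE /= !inE /= c2 eqxx.
Qed.

Lemma total_comp (U V W : qspace) (f : SpHom U V) (g : SpHom V W) :
  total f -> total g -> total (spcomp f g).
Proof.
move=> /totalP tf /totalP tg; apply/totalP => x; have [y xy] := tf x.
have [z yz] := tg y; exists z; rewrite sp_compE; apply/existsP; exists y.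
by rewrite xy yz.
Qed.

Lemma min_witness (G : Func) (W : qspace) (z : G W) :
  forall n (V' : qspace) (k : SpHom W V'), (qdim V' <= n)%N -> Fmor G k z != 0 ->
  exists (V'' : qspace) (k'' : SpHom W V''), Fmor G k'' z != 0 /\
    forall (V3 : qspace) (k3 : SpHom W V3), (qdim V3 < qdim V'')%N -> Fmor G k3 z = 0.
Proof.
elim=> [|n IH] V' k Hn Hk.
  exists V', k; split => // V3 k3; rewrite leqn0 in Hn.
  by rewrite (eqP Hn).
case: (classic (exists V3 (k3 : SpHom W V3), (qdim V3 < qdim V')%N /\ Fmor G k3 z != 0)).
  case=> V3 [k3 [lt nz]]; apply: (IH V3 k3) => //.
  by rewrite -ltnS (leq_trans lt Hn).
move=> H; exists V', k; split => // V3 k3 lt; apply/eqP; apply: contraT => nz.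
by exfalso; apply: H; exists V3, k3.
Qed.

Lemma good_vec (S : qspace -> Prop)
  (HS : forall V : qspace, exists W : qspace,
          S W /\ isometric V W /\
          (forall W' : qspace, S W' -> isometric V W' -> W' = W))
  (G : Func) (W : qspace) (z : G W) : z != 0 ->
  exists U : qspace, S U /\ exists k : SpHom W U, Fmor G k z != 0 /\
    forall D, D \in Lset U -> Fmor G (pd D) (Fmor G k z) = 0.
Proof.
move=> nz0.
have nzid : Fmor G (spid W) z != 0 by rewrite Fmor_id.
have [V'' [k'' [nz min]]] := @min_witness G W z (qdim W) W (spid W) (leqnn _) nzid.
set w := Fmor G k'' z in nz.
have kill : forall D, D \in Lset V'' -> Fmor G (pd D) w = 0.
  move=> D DL; have [D' [lt [s [t E]]]] := sub_factor DL.
  by rewrite -E Fmor_comp /w -(Fmor_comp G _ _ _ k'' s) min // (lin0 (Fmor_linear G _ _ _)).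
have killh : forall (h : SpHom V'' V''), ~~ total h -> Fmor G h w = 0.
  move=> h nh; rewrite -(pd_sdom h) Fmor_comp kill ?sdom_Lset //.
  exact: (lin0 (Fmor_linear G _ _ _)).
have [U [SU [isoU _]]] := HS V''.
have [a [b [ab ba]]] := iso_spans isoU.
exists U; split => //; exists (spcomp k'' a); rewrite Fmor_comp -/w; split.
  apply: contra nz => /eqP E.
  by rewrite -[w](Fmor_id G) -ab Fmor_comp E (lin0 (Fmor_linear G _ _ _)).
move=> D DL; rewrite -Fmor_comp.
have -> : spcomp a (pd D) = spcomp (spcomp (spcomp a (pd D)) b) a.
  by rewrite spcompA ba spcomps1.
rewrite Fmor_comp killh ?(lin0 (Fmor_linear G _ _ _)) //.
apply: contra (Lset_nontotal DL) => T.
have tb : total b by apply: (@total_compl _ _ _ b a); rewrite ba total_id.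
have -> : pd D = spcomp b (spcomp a (pd D)) by rewrite -spcompA ba spcomp1s.
by apply: total_comp => //; exact: total_compl T.
Qed.

Theorem corollary4p36 (S : qspace -> Prop)
  (HS : forall V : qspace, exists W : qspace,
          S W /\ isometric V W /\
          (forall W' : qspace, S W' -> isometric V W' -> W' = W)) :
  ((forall V : qspace, S V -> is_projective (isoF V)) /\
   is_generating (fun i : {V : qspace | S V} => isoF (proj1_sig i))) /\
  ((forall V : qspace, S V -> is_injective (isoF V)) /\
   is_cogenerating (fun i : {V : qspace | S V} => isoF (proj1_sig i))).
Proof.
split; split.
- by move=> V _; exact: iso_proj.
- move=> F G a b neq.
  have [W [x nx]] : exists W (x : F W), a W x != b W x.
    apply: NNPP => H; apply: neq => W x; apply/eqP; apply: contraT => nx.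
    by exfalso; apply: H; exists W, x.
  have nz : a W x - b W x != 0 by rewrite subr_eq0.
  have [U [SU [k [nzk kill]]]] := good_vec HS nz.
  set x0 := EE F (Fmor F k x).
  have Hx0 : forall W' (h : SpHom U W'), ~~ total h -> Fmor F h x0 = 0.
    by move=> W' h nh; exact: EE_nontotal.
  exists (exist _ U SU), (lamNT Hx0) => H.
  have := H U (eid U); rewrite /= -[lam_fun x0 (eid U)]/(lamNT Hx0 U (eid U)) lamNT_eid.
  rewrite /x0 /EE !Eop_nat !nt_natural => /eqP; apply/negP.
  rewrite -subr_eq0 -(linB (@Eop_lin G U (Lset U))) -(linB (Fmor_linear G _ _ _)).
  by rewrite Eop_id.
- by move=> V _; exact: iso_inj.
- move=> F G a b neq.
  have [W [x nx]] : exists W (x : F W), a W x != b W x.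
    apply: NNPP => H; apply: neq => W x; apply/eqP; apply: contraT => nx.
    by exfalso; apply: H; exists W, x.
  have nz : a W x - b W x != 0 by rewrite subr_eq0.
  have [U [SU [k [nzk kill]]]] := good_vec HS nz.
  set w := Fmor G k (a W x - b W x) in nzk kill.
  pose f (m : G U) : F2 := if m == 0 then 0 else 1.
  have U0 : (0 : G U) = 0 \/ (0 : G U) = w by left.
  have UD : forall u v, (u = 0 \/ u = w) -> (v = 0 \/ v = w) -> (u + v = 0 \/ u + v = w).
    move=> u v [] -> [] ->; rewrite ?addr0 ?add0r; by [left|right|left; exact: addvv].
  have fD : forall u v, (u = 0 \/ u = w) -> (v = 0 \/ v = w) -> f (u + v) = f u + f v.
    move=> u v [] -> [] ->; rewrite ?addr0 ?add0r /f ?eqxx ?addr0 ?add0r //.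
    by rewrite addvv eqxx (negbTE nzk) F2_11.
  have [psi [psil psiU]] := @ext_functional (G U) (fun m => m = 0 \/ m = w) f U0 UD fD.
  have psiw : psi w = 1 by rewrite psiU; [rewrite /f (negbTE nzk) | right].
  pose phi (g : G U) : F2^o := psi (EE G g).
  have phil : linmap phi by move=> c u v; rewrite /phi /EE Eop_lin psil.
  have phik : forall D y, D \in Lset U -> phi (Fmor G (pd D) y) = 0.
    move=> D y DL; rewrite /phi /EE -Eop_pd ?Lset_sub ?Lset_subsp //.
    by rewrite Eop_kill ?Lset_sub // (lin0 psil).
  exists (exist _ U SU), (etaNT phil phik) => H.
  have := H W x => /(congr1 (fun l : iso_ob U W => val l (sptr k))).
  rewrite /= !ffunE sptrK => /eqP; rewrite -subr_eq0 -(linB phil).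
  rewrite -(linB (Fmor_linear G _ _ _)) -/w /phi /EE Eop_id // psiw.
  by rewrite oner_eq0.
Qed.
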